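(* Every derivable sequent $\Gamma\vdash A$ of the sequent calculus has exactly one focused derivation.
   Context: Formulas are built from atoms ($p,q,\dots$) by a binary product: every formula is an atom or $A\bullet B$. A context is a finite (possibly empty) list of formulas; commas denote concatenation. The sequent calculus has exactly four rules (no weakening, contraction or exchange): ($\bullet L$) from $A,B,\Delta\vdash C$ infer $A\bullet B,\Delta\vdash C$ (the product must be the leftmost formula); ($\bullet R$) from $\Gamma\vdash A$ and $\Delta\vdash B$ infer $\Gamma,\Delta\vdash A\bullet B$; ($id$) $A\vdash A$; ($cut$) from $\Theta\vdash A$ and $\Gamma,A,\Delta\vdash B$ infer $\Gamma,\Theta,\Delta\vdash B$. A derivation is a finite rooted tree whose nodes are labelled by rule instances and whose edges are labelled by sequents; a sequent is derivable if it is the conclusion of a derivation with no undischarged premises. A context is irreducible if its leftmost formula is not a product (it is empty or begins with an atom). A focused derivation is a derivation (with no undischarged premises) using only: ($\bullet L$); ($\bullet R^{foc}$): from $\Gamma\vdash A$ and $\Delta\vdash B$ infer $\Gamma,\Delta\vdash A\bullet B$, where $\Gamma$ is irreducible; and ($id^{atm}$): $p\vdash p$ for atoms $p$. *)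

(* Defs.v *)
(* Non-commutative, non-unital Lambek-style product calculus. *)
From Stdlib Require Import List.
Import ListNotations.

Inductive fma : Type :=
| At : nat -> fma
| Prod : fma -> fma -> fma.

(** Derivations of the full calculus (with cut), as proof-relevant trees:
    a term of type [deriv G A] is a derivation of the sequent G ⊢ A.
    Contexts are lists; commas are concatenation [++]. *)
Inductive deriv : list fma -> fma -> Type :=
| d_prodL : forall (A B : fma) (D : list fma) (C : fma),
    deriv (A :: B :: D) C -> deriv (Prod A B :: D) C
| d_prodR : forall (G D : list fma) (A B : fma),
    deriv G A -> deriv D B -> deriv (G ++ D) (Prod A B)
| d_id : forall A : fma, deriv [A] A
| d_cut : forall (Th G D : list fma) (A B : fma),
    deriv Th A -> deriv (G ++ A :: D) B -> deriv (G ++ Th ++ D) B.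

Definition derivable (G : list fma) (A : fma) : Prop := inhabited (deriv G A).

(** A context is irreducible if it is empty or its leftmost formula is an atom
    (boolean version, so that the side condition carries no proof content). *)
Definition irreducible (G : list fma) : bool :=
  match G with
  | Prod _ _ :: _ => false
  | _ => true
  end.

Inductive foc : list fma -> fma -> Type :=
| f_prodL : forall (A B : fma) (D : list fma) (C : fma),
    foc (A :: B :: D) C -> foc (Prod A B :: D) C
| f_prodR : forall (G D : list fma) (A B : fma),
    irreducible G = true -> foc G A -> foc D B -> foc (G ++ D) (Prod A B)
| f_id : forall p : nat, foc [At p] (At p).

(* Main.v *)
Require Import Defs.
From Stdlib Require Import List Lia Program.Equality Eqdep_dec.
Import ListNotations.
Lemma foc_ne G A : foc G A -> G <> [].
Proof. induction 1; try discriminate. destruct G; [congruence|discriminate]. Qed.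

Lemma prodR_adm G D A B : foc G A -> foc D B -> inhabited (foc (G ++ D) (Prod A B)).
Proof.
  intros d1 d2. induction d1.
  - destruct IHd1 as [f]. constructor. simpl in *. apply f_prodL. exact f.
  - constructor. apply (f_prodR (G ++ D0) D); auto.
    + destruct G; [exfalso; exact (foc_ne _ _ d1_1 eq_refl)|auto].
    + apply f_prodR; auto.
  - constructor. apply (f_prodR [At p]); auto. apply f_id.
Qed.

Lemma id_adm A : inhabited (foc [A] A).
Proof. induction A.
  - constructor; apply f_id.
  - destruct IHA1 as [f1], IHA2 as [f2]. destruct (prodR_adm _ _ _ _ f1 f2) as [f].
    constructor. apply f_prodL. exact f.
Qed.

Fixpoint fsize A := match A with At _ => 1 | Prod A B => S (fsize A + fsize B) end.

Lemma cut_adm n : forall A, fsize A <= n -> forall Th (d1 : foc Th A) L B (d2 : foc L B) G D,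
  L = G ++ A :: D -> inhabited (foc (G ++ Th ++ D) B).
Proof.
  induction n as [|n IHn]; intros A HA; [destruct A; simpl in HA; lia|].
  intros Th d1 L B d2. induction d2; intros G0 D0 EL.
  -
    destruct G0 as [|f G0].
    + simpl in EL. injection EL as E1 E2; subst. simpl in HA.
      clear IHd2. revert d2 HA. revert d1.
      remember (Prod A0 B) as P eqn:EP. intros d1. revert A0 B EP.
      induction d1; intros A1 B1 EP d2 HA.
      * destruct (IHd1 A1 B1 EP d2 HA) as [f]. constructor. simpl. apply f_prodL. exact f.
      * injection EP as -> ->.
        destruct (IHn A1 ltac:(lia) _ d1_1 _ _ d2 [] (B1 :: D0) eq_refl) as [f].
        destruct (IHn B1 ltac:(lia) _ d1_2 _ _ f G D0 eq_refl) as [g].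
        rewrite <- app_assoc. constructor. exact g.
      * discriminate.
    + simpl in EL. injection EL as E1 E2; subst.
      destruct (IHd2 (A0 :: B :: G0) D0 eq_refl) as [f]. constructor. simpl. apply f_prodL. exact f.
  -
    apply app_eq_app in EL. destruct EL as [l [[E1 E2]|[E1 E2]]]; subst.
    + destruct l as [|x l].
      * simpl in E2. subst D. rewrite app_nil_r in *.
        destruct (IHd2_2 [] D0 eq_refl) as [f]. simpl in f.
        constructor. apply f_prodR; auto.
      * simpl in E2. injection E2 as E3 E4. subst.
        destruct (IHd2_1 G0 l eq_refl) as [f].
        destruct (prodR_adm _ _ _ _ f d2_2) as [g].
        rewrite <- !app_assoc in g. simpl in g. simpl. rewrite <- ?app_assoc. simpl. exact (inhabits g).
    + destruct (IHd2_2 l D0 eq_refl) as [f].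
      rewrite <- app_assoc. constructor. apply f_prodR; auto.
  - destruct G0 as [|x G0]; simpl in EL; injection EL as -> EL.
    + subst D0. simpl. rewrite app_nil_r. constructor. exact d1.
    + destruct G0; discriminate.
Qed.
Fixpoint flat (A : fma) : list nat :=
  match A with At p => [p] | Prod A B => flat A ++ flat B end.
Fixpoint flatL (G : list fma) : list nat :=
  match G with [] => [] | A :: G => flat A ++ flatL G end.

Lemma flatL_app G D : flatL (G ++ D) = flatL G ++ flatL D.
Proof. induction G; simpl; auto. rewrite IHG, app_assoc; auto. Qed.

Lemma foc_flat G A : foc G A -> flatL G = flat A.
Proof. induction 1; simpl in *; auto.
 - rewrite app_assoc in *; auto.
 - rewrite flatL_app; congruence.
Qed.

Lemma flat_ne A : flat A <> [].
Proof. induction A; simpl; try discriminate. destruct (flat A1); [congruence|discriminate]. Qed.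

Lemma split_uniq : forall G D G2 D2, G2 ++ D2 = G ++ D -> flatL G2 = flatL G -> G2 = G.
Proof.
  induction G; intros D G2 D2 H F.
  - destruct G2; auto. simpl in F. apply app_eq_nil in F. destruct F as [F _]. now apply flat_ne in F.
  - destruct G2 as [|b G2].
    + simpl in F. symmetry in F. apply app_eq_nil in F. destruct F as [F _]. now apply flat_ne in F.
    + simpl in H. injection H as -> H. simpl in F. apply app_inv_head in F. f_equal. eauto.
Qed.

Lemma irr_head G D X Y E : irreducible G = true -> G <> [] -> G ++ D = Prod X Y :: E -> False.
Proof. destruct G as [|f G]; intros; [congruence|]. simpl in *. injection H1 as -> _. discriminate. Qed.


Lemma foc_uniq G A (d1 d2 : foc G A) : d1 = d2.
Proof.
  induction d1.
  - dependent destruction d2.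
    + f_equal; auto.
    + exfalso. eapply irr_head; eauto. eapply foc_ne; eauto.
  - dependent destruction d2.
    + exfalso. eapply irr_head; [exact e| eapply foc_ne; eauto | eauto].
    + assert (G0 = G) by (eapply split_uniq; [exact x0| rewrite (foc_flat _ _ d2_1), (foc_flat _ _ d1_1); auto]).
      subst G0. pose proof (app_inv_head _ _ _ x0). subst D0.
      apply JMeq_eq in x. subst d0.
      rewrite (UIP_dec Bool.bool_dec e e0). f_equal; auto.
  - dependent destruction d2. reflexivity.
Qed.

Lemma cut_foc Th A G D B : foc Th A -> foc (G ++ A :: D) B -> inhabited (foc (G ++ Th ++ D) B).
Proof. intros d1 d2. exact (cut_adm (fsize A) A (le_n _) Th d1 _ B d2 G D eq_refl). Qed.

Lemma deriv_foc G A : deriv G A -> inhabited (foc G A).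
Proof.
  intros d; induction d.
  - destruct IHd as [f]. constructor. apply f_prodL. exact f.
  - destruct IHd1 as [f1], IHd2 as [f2]. exact (prodR_adm _ _ _ _ f1 f2).
  - apply id_adm.
  - destruct IHd1 as [f1], IHd2 as [f2]. exact (cut_foc _ _ _ _ _ f1 f2).
Qed.

Theorem theorem1p17 :
  forall (G : list fma) (A : fma),
    derivable G A ->
    exists d : foc G A, forall d' : foc G A, d' = d.
Proof.
  intros G A [d]. destruct (deriv_foc _ _ d) as [f]. exists f. intros d'. apply foc_uniq.
Qed.
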